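(* For all $x, e \in \mathcal{P}$ we have $x \in \ell_e$ if and only if $e \in \ell_{x^{q/2}}$.
   Context: Let $q = 2^m$, let $E = \mathbb{F}_{q^4}$, and define $\mathcal{P} = \{x \in E \mid x^{q^3+q^2+q+1} = 1\}$. For $e \in \mathcal{P}$, let $$\ell_e = \{x \in \mathcal{P} \mid x^{q+1} + (e^{q^2+q+2} + e^{q+1})x + e^2 = 0\}.$$ *)

(* Defs.v *)
From mathcomp Require Import all_boot all_algebra all_field.
Set Implicit Arguments. Unset Strict Implicit. Unset Printing Implicit Defensive.
Import GRing.Theory.
Local Open Scope ring_scope.

Definition inP (E : finFieldType) (q : nat) (x : E) : bool :=
  x ^+ (q ^ 3 + q ^ 2 + q + 1)%N == 1.

Definition in_ell (E : finFieldType) (q : nat) (e x : E) : bool :=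
  inP q x &&
  (x ^+ (q + 1)%N + (e ^+ (q ^ 2 + q + 2)%N + e ^+ (q + 1)%N) * x + e ^+ 2 == 0).

(* Main.v *)
Require Import Defs.
From mathcomp Require Import all_boot all_algebra all_field.
From mathcomp Require Import ring.
Import GRing.Theory.
Local Open Scope ring_scope.

Section Aux.
Variable E : finFieldType.
Hypothesis two0 : (2%:R : E) = 0.

Lemma sqrD (a b : E) : (a + b) ^+ 2 = a ^+ 2 + b ^+ 2.
Proof. by rewrite sqrrD -mulr_natr two0 mulr0 addr0. Qed.

Lemma frobD k (a b : E) : (a + b) ^+ (2 ^ k) = a ^+ (2 ^ k) + b ^+ (2 ^ k).
Proof.
elim: k => [|k IH]; first by rewrite !expr1.
by rewrite expnSr !exprM IH sqrD.
Qed.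

Lemma neg1 (a : E) : - a = a.
Proof. by apply/eqP; rewrite eq_sym -subr_eq0 opprK -mulr2n -mulr_natr two0 mulr0. Qed.

End Aux.

Lemma forward (m : nat) (hm : (0 < m)%N) (E : finFieldType)
    (hE : #|E| = ((2 ^ m) ^ 4)%N) (two0 : (2%:R : E) = 0) (x e : E) :
  inP (2 ^ m) x -> inP (2 ^ m) e -> in_ell (2 ^ m) e x ->
  in_ell (2 ^ m) (x ^+ (2 ^ m.-1)%N) e.
Proof.
set q := (2 ^ m)%N.
move=> Px Pe /andP[_ /eqP HA]; rewrite /in_ell Pe /=.
have Fq a b : (a + b) ^+ q = a ^+ q + b ^+ q :> E by exact: frobD.
have cardq (a : E) : ((a ^+ q) ^+ q) ^+ q ^+ q = a.
  by rewrite -!exprM -[X in _ = X](expf_card a) hE; congr (_ ^+ _); rewrite /q !expnS expn0; ring.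
have nrm (a : E) : inP q a -> a * a ^+ q * (a ^+ q) ^+ q * ((a ^+ q) ^+ q) ^+ q = 1.
  move=> /eqP <-; rewrite -!exprM -[X in X * _ * _ * _ = _]expr1 -!exprD; congr (_ ^+ _).
  rewrite !expnS expn0 !muln1; ring.
have eq2 : (q ^ 2 = q * q)%N by rewrite mulnn.
have eq3 : (q ^ 3 = q * q * q)%N by rewrite !expnS expn0 muln1 mulnA.
set y := x ^+ (2 ^ m.-1).
have y2 : y ^+ 2 = x ^+ q by rewrite /y -exprM /q -expnSr prednK.
set X1 := x ^+ q; set X2 := X1 ^+ q; set X3 := X2 ^+ q.
set E1 := e ^+ q; set E2 := E1 ^+ q; set E3 := E2 ^+ q.
have nx := nrm x Px; have ne := nrm e Pe.
rewrite -/X1 -/X2 -/X3 in nx; rewrite -/E1 -/E2 -/E3 in ne.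
have X3q : X3 ^+ q = x by exact: cardq.
have E3q : E3 ^+ q = e by exact: cardq.
have xn0 : x != 0.
  apply/eqP=> x0; move: nx; rewrite x0 !mul0r => /eqP; by rewrite eq_sym oner_eq0.
have Aat : x ^+ (q + 1) + (e ^+ (q ^ 2 + q + 2) + e ^+ (q + 1)) * x + e ^+ 2
   = X1 * x + (E2 * E1 * e ^+ 2 + E1 * e) * x + e ^+ 2.
  by rewrite !exprD eq2 exprM !expr1.
rewrite Aat in HA.
set S := _ + _ * e + _.
suff : S ^+ 2 * x = X1 * (X1 * x + (E2 * E1 * e ^+ 2 + E1 * e) * x + e ^+ 2)
          + x * e ^+ 2 * (X1 * x + (E2 * E1 * e ^+ 2 + E1 * e) * x + e ^+ 2) ^+ q.
  rewrite HA mulr0 add0r expr0n /q expn_eq0 /= mulr0 => /eqP; rewrite mulf_eq0 (negbTE xn0) orbF expf_eq0 => /andP[].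
  by [].
have Sat : S ^+ 2 = E1 ^+ 2 * e ^+ 2 + (X3 * X2 * X1 ^+ 2 + X2 * X1) * e ^+ 2 + X1 ^+ 2.
  rewrite /S !(@sqrD _ two0, exprMn).
  rewrite [(y ^+ (q ^ 2 + q + 2)) ^+ 2]exprAC [(y ^+ (q + 1)) ^+ 2]exprAC y2 -/X1.
  rewrite !exprD !expr1 eq2 !exprM -/X2 -/X3 -/E1.
  ring.
rewrite Sat !(Fq, exprMn) -/X2 -/X1 -/E1 -/E2 -/E3.
apply/eqP; rewrite -subr_eq0; apply/eqP.
have h11 : 1 + 1 = 0 :> E by rewrite -mulr2n two0.
transitivity (e ^+ 2 * X1 * (x * X1 * X2 * X3 - 1) - e * E1 * X1 * x * (1 + e * E1 * E2 * E3)
  - 2%:R * e ^+ 2 * E1 * E2 * X1 * x); first by ring.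
by rewrite nx ne subrr h11 two0; ring.
Qed.


Theorem mainTheorem7 (m : nat) (hm : (0 < m)%N) (E : finFieldType)
    (hE : #|E| = ((2 ^ m) ^ 4)%N) (x e : E) :
  inP (2 ^ m) x -> inP (2 ^ m) e ->
  (in_ell (2 ^ m) e x <-> in_ell (2 ^ m) (x ^+ (2 ^ m.-1)%N) e).
Proof.
move=> Px Pe.
have two0 : (2%:R : E) = 0.
  apply: pcharf0; apply: (@card_finPcharP _ 2 (m * 4)) => //.
  by rewrite hE expnM.
split; first exact: (@forward m hm E hE two0).
move=> H.
have Py : inP (2 ^ m) (x ^+ (2 ^ m.-1)).
  by rewrite /inP -exprM mulnC exprM (eqP Px) expr1n.
have := @forward m hm E hE two0 e _ Pe Py H.
case/andP=> _ /eqP H2.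
rewrite /in_ell Px /=.
set h := (2 ^ m.-1)%N in H2 *.
have Fh a b : (a + b) ^+ h = a ^+ h + b ^+ h :> E by exact: frobD.
set A := _ + _ + _.
have : A ^+ h = 0.
  rewrite -H2 /A !(Fh, exprMn) -!exprM.
  congr (_ + _ * _ + _); rewrite ?(mulnC h) //.
  by rewrite mulnC exprM expr2.
by move/eqP; rewrite expf_eq0 => /andP[].
Qed.
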